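(* Let $q$ be a prime power and $n,t,m$ positive integers with $t\geq m$. Let $\ell$ be a positive integer such that $$ {\ell+s\choose t}\left(\frac{m}{q}\right)^{n}<s+1 $$ for some integer $s\geq 0$. Then $EGZ(t,\mathbb{F}_q^{n},m) > \ell$.
   Context: $\mathbb{F}_q^n$ is viewed as a commutative ring with coordinatewise operations. For elements $g_1,\dots,g_t$ of a commutative ring $R$, $e_m(g_1,\dots,g_t)=\sum_{1\leq i_1<\cdots<i_m\leq t}\prod_{j=1}^m g_{i_j}$. A sequence over $R$ is a finite list of elements of $R$ (repetitions allowed); a subsequence of length $t$ is obtained by choosing $t$ distinct positions. For a finite commutative ring $R$, $EGZ(t,R,m)$ is the smallest positive integer $\ell$ such that every sequence $S$ over $R$ of length $|S|\geq \ell$ contains a subsequence $S'$ of length $t$ with $e_m(S')=0$ in $R$; if no such $\ell$ exists, $EGZ(t,R,m)=\infty$. *)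

(* Defs.v *)
From HB Require Import structures.
From mathcomp Require Import all_boot all_order all_algebra.
Set Implicit Arguments. Unset Strict Implicit. Unset Printing Implicit Defensive.
Import Order.TTheory GRing.Theory Num.Theory.
Local Open Scope ring_scope.

(* The ring F^n with coordinatewise operations: {ffun 'I_n -> F}
   (MathComp equips finite functions into a ring with pointwise addition and multiplication). *)
Definition Fpow (F : finFieldType) (n : nat) := {ffun 'I_n -> F}.

Definition esym_seq (R : pzSemiRingType) (m : nat) (g : seq R) : R :=
  \sum_(I : {set 'I_(size g)} | #|I| == m) \prod_(i in I) nth 0 g i.

Definition EGZ_prop (R : pzSemiRingType) (t m L : nat) : Prop :=
  forall S : seq R, (L <= size S)%N ->
    exists msk : bitseq, size msk = size S /\ count id msk = t /\
      esym_seq m (mask msk S) = 0.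

(* EGZ(t,R,m) > l  :  no positive integer L <= l has the EGZ property, i.e.
   the least positive L with the property (if any; otherwise EGZ = oo)
   exceeds l. *)
Definition EGZ_gt (R : pzSemiRingType) (t m l : nat) : Prop :=
  forall L : nat, (0 < L)%N -> (L <= l)%N -> ~ EGZ_prop R t m L.

(* Main.v *)
Require Import Defs.
From HB Require Import structures.
From mathcomp Require Import all_boot all_order all_algebra.
From mathcomp Require Import zify.
Set Implicit Arguments. Unset Strict Implicit. Unset Printing Implicit Defensive.
Import Order.TTheory GRing.Theory Num.Theory.
Local Open Scope ring_scope.

Fixpoint Esym (R : pzSemiRingType) (m : nat) (s : seq R) : R :=
  match s with
  | [::] => (m == 0)%:R
  | x :: s' => match m with 0 => 1 | m'.+1 => x * Esym m' s' + Esym m s' end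
  end.

Definition esymF (R : pzSemiRingType) (k m : nat) (h : 'I_k -> R) : R :=
  \sum_(I : {set 'I_k} | #|I| == m) \prod_(i in I) h i.

Lemma esymF_poly (F : fieldType) k m (h : 'I_k -> F) :
  esymF m h = (\prod_(i < k) ((h i)%:P * 'X + 1))`_m.
Proof.
rewrite bigA_distr coef_sum /esymF; symmetry.
rewrite (bigID (fun I : {set 'I_k} => #|I| == m)) /= [X in _ + X]big1 ?addr0.
  apply: eq_big => // I.
  move=> /eqP <-.
  rewrite -big_mkcond /= big_split /= -rmorph_prod prodr_const coefCM coefXn eqxx mulr1 //.
move=> I HI.
rewrite -big_mkcond /= big_split /= -rmorph_prod prodr_const coefCM coefXn eq_sym (negbTE HI) mulr0 //.
Qed.

Lemma esymF_Esym (F : fieldType) k : forall m (h : 'I_k -> F),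
  esymF m h = Esym m [seq h i | i <- enum 'I_k].
Proof.
elim: k => [|k IH] m h.
  rewrite esymF_poly big_ord0 coefC.
  have -> : [seq h i | i <- enum 'I_0] = [::].
    by apply/nilP; rewrite /nilp size_map size_enum_ord.
  by case: m.
rewrite esymF_poly big_ord_recl enum_ordSl /= -map_comp.
rewrite mulrDl mul1r coefD -mulrA coefCM coefXM.
case: m => [|m] /=.
  rewrite mulr0 add0r.
  transitivity (esymF 0 (h \o lift ord0)); first by rewrite esymF_poly.
  rewrite /esymF (big_pred1 set0); first by rewrite big_set0.
  by move=> I; rewrite /= cards_eq0.
by rewrite -!IH !esymF_poly.
Qed.

Lemma esym_coord (F : fieldType) n m (g : seq {ffun 'I_n -> F}) (j : 'I_n) :
  (esym_seq m g) j = Esym m [seq (x : {ffun 'I_n -> F}) j | x <- g].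
Proof.
rewrite /esym_seq sum_ffunE.
transitivity (esymF m (fun i : 'I_(size g) => (nth 0 g i) j)).
  apply: eq_bigr => I _.
  by apply: (big_morph (fun f : {ffun 'I_n -> F} => f j)) => [a b|]; rewrite ffunE.
rewrite esymF_Esym; congr Esym.
rewrite -[in RHS](mkseq_nth 0 g) /mkseq -val_enum_ord -!map_comp.
by apply: eq_map.
Qed.

Lemma Esym0 (R : pzSemiRingType) (s : seq R) : Esym 0 s = 1.
Proof. by case: s. Qed.

Lemma card_sumb (T : finType) (P : pred T) : #|[set x | P x]| = (\sum_x (P x : nat))%N.
Proof.
rewrite -sum1_card big_mkcond /=; apply: eq_bigr => x _; rewrite inE; by case: (P x).
Qed.

Lemma tuple_sum (T : finType) N (G : N.+1.-tuple T -> nat) :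
  (\sum_(w : N.+1.-tuple T) G w = \sum_(x : T) \sum_(w : N.-tuple T) G [tuple of x :: w])%N.
Proof.
rewrite pair_big /=.
rewrite (reindex (fun p : T * N.-tuple T => [tuple of p.1 :: p.2])) /=.
  by apply: eq_bigr => -[x w].
exists (fun w => (thead w, [tuple of behead w])) => [[x w]|w] _ /=.
  by rewrite theadE; congr pair; apply: val_inj.
by rewrite -tuple_eta.
Qed.

Lemma inner_bound (F : finFieldType) (a b : F) :
  (\sum_(x : F) nat_of_bool (x * a + b == 0)%R <= 1 + #|F| * nat_of_bool (a == 0)%R)%N.
Proof.
have [->|a0] := eqVneq a 0.
  under eq_bigr => x _ do rewrite mulr0 add0r.
  rewrite sum_nat_const cardE /= -cardE; case: (b == 0); lia.
rewrite (bigD1 (- b / a)) //= big1.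
  by rewrite divfK // addNr eqxx.
move=> x /negbTE xn.
case: eqP => // H; move/negbT: xn; case/negP; apply/eqP.
by rewrite -[x](mulfK a0) -[x * a](addrK b) H sub0r.
Qed.

Lemma SZ (F : finFieldType) (msk : bitseq) : forall N m,
  size msk = N -> (m <= count id msk)%N ->
  (#|[set w : N.-tuple F | (Esym m (mask msk w) == 0)%R]| * #|F| <= m * #|F| ^ N)%N.
Proof.
elim: msk => [|b msk IH] N m.
  move=> <- /=; rewrite leqn0 => /eqP ->.
  suff -> : [set w : 0.-tuple F | (Esym 0 (mask [::] w) == 0)%R] = set0 by rewrite cards0.
  by apply/setP => w; rewrite !inE Esym0 oner_eq0.
case: N => [//|N] /= [sN] Hm.
case: m Hm => [|m] Hm.
  suff -> : [set w : N.+1.-tuple F | (Esym 0 (mask (b :: msk) w) == 0)%R] = set0 by rewrite cards0.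
  by apply/setP => w; rewrite !inE Esym0 oner_eq0.
rewrite card_sumb tuple_sum.
case: b Hm => /= Hm.
  rewrite exchange_big /=.
  apply: (@leq_trans ((\sum_(w : N.-tuple F) (1 + #|F| * nat_of_bool (Esym m (mask msk w) == 0)%R)) * #|F|)).
    by rewrite leq_mul2r; apply/orP; right; apply: leq_sum => w _; apply: inner_bound.
  rewrite big_split /= sum_nat_const -big_distrr /=.
  have := IH N m sN Hm; rewrite card_sumb.
  change #|xpredT| with #|{: N.-tuple F}|; rewrite card_tuple.
  rewrite expnS => H.
  rewrite mulnDl -mulnA mulnCA [X in (_ <= X)%N]mulnCA mulSn.
  set X := (\sum_i _)%N in H *. have H2 : (#|F| * (X * #|F|) <= #|F| * (m * #|F| ^ N))%N by rewrite leq_mul2l H orbT.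
  move: H2; rewrite -/X; set Y := (#|F| ^ N)%N; set q := #|F|; clearbody X Y q; nia.
under eq_bigr => x _ do under eq_bigr => w _ do rewrite /=.
rewrite sum_nat_const.
have := IH N m.+1 sN Hm; rewrite card_sumb.
change #|xpredT| with #|F|.
rewrite expnS -mulnA mulnCA => H.
by rewrite mulnCA [X in (_ <= X)%N]mulnCA leq_mul2l H orbT.
Qed.

Lemma card_count (T : finType) (A : {set T}) : #|A| = count [in A] (enum T).
Proof.
rewrite -size_filter.
have /card_uniqP <- : uniq [seq x <- enum T | x \in A] by rewrite filter_uniq // enum_uniq.
by apply: eq_card => x; rewrite mem_filter mem_enum andbT.
Qed.

Section Main.
Variables (F : finFieldType) (n N m : nat).

Definition fC (C : {ffun 'I_n -> N.-tuple F}) (i : 'I_N) : {ffun 'I_n -> F} :=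
  [ffun j => tnth (C j) i].

Definition subC C (J : {set 'I_N}) := [seq fC C i | i <- enum 'I_N & i \in J].

Definition mskJ (J : {set 'I_N}) := [seq i \in J | i <- enum 'I_N].

Definition AJ (J : {set 'I_N}) := [set w : N.-tuple F | (Esym m (mask (mskJ J) w) == 0)%R].

Lemma subC_coord C J j : (esym_seq m (subC C J)) j = Esym m (mask (mskJ J) (C j)).
Proof.
rewrite esym_coord; congr Esym.
rewrite /subC /mskJ -map_comp.
rewrite -[in RHS](map_tnth_enum (C j)) -map_mask -filter_mask.
by apply: eq_map => i /=; rewrite ffunE.
Qed.

Lemma bad_iff C J : (esym_seq m (subC C J) == 0) = (C \in ffun_on (AJ J)).
Proof.
apply/eqP/ffun_onP => [H j | H].
  by rewrite inE -subC_coord H ffunE.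
apply/ffunP => j; rewrite subC_coord ffunE; apply/eqP.
by have := H j; rewrite inE.
Qed.


Lemma sum_card (T : finType) (A : {pred T}) : (\sum_x ((x \in A) : nat))%N = #|A|.
Proof.
rewrite -sum1_card [RHS]big_mkcond /=; apply: eq_bigr => x _; by case: (x \in A).
Qed.

Variable t : nat.

Definition Bad C := [set J : {set 'I_N} | (#|J| == t) && (esym_seq m (subC C J) == 0)].

Lemma count_bound : (0 < n)%N -> (m <= t)%N ->
  ((\sum_C #|Bad C|) * #|F| ^ n <= 'C(N, t) * (m * #|F| ^ N) ^ n)%N.
Proof.
move=> Hn Hmt.
under eq_bigr => C _ do rewrite card_sumb.
rewrite exchange_big /= big_distrl /=.
apply: (@leq_trans (\sum_(J : {set 'I_N}) ((#|J| == t) : nat) * (m * #|F|^N)^n)%N).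
  apply: leq_sum => J _.
  case: (boolP (#|J| == t)) => HJ /=.
    rewrite mul1n.
    under eq_bigr => C _ do rewrite bad_iff.
    rewrite sum_card card_ffun_on card_ord -expnMn leq_exp2r //.
    apply: SZ; first by rewrite size_map size_enum_ord.
    by rewrite count_map -card_count (eqP HJ).
  by rewrite big1.
rewrite -big_distrl /= -card_sumb card_draws card_ord //.
Qed.

End Main.

Theorem theorem2p5 (F : finFieldType) (n t m l : nat) :
  (0 < n)%N -> (0 < t)%N -> (0 < m)%N -> (m <= t)%N -> (0 < l)%N ->
  (exists s : nat,
     ('C(l + s, t))%:R * ((m%:R / (#|F|)%:R) ^+ n) < (s + 1)%:R :> rat) ->
  EGZ_gt (Fpow F n) t m l.
Proof.
move=> Hn Ht Hm Hmt Hl [s Hs] L HL HLl HE.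
have Hq : (0 < #|F|)%N by apply/card_gt0P; exists 0.
have Hnat : ('C(l + s, t) * m ^ n < (s + 1) * #|F| ^ n)%N.
  move: Hs; rewrite expr_div_n mulrA ltr_pdivrMr; last by rewrite exprn_gt0 // ltr0n.
  by rewrite -!natrX -!natrM ltr_nat.
set N := (l + s)%N.
have [C HC] : exists C : {ffun 'I_n -> N.-tuple F}, (#|@Bad F n N m t C| <= s)%N.
  case: (boolP [exists C, #|@Bad F n N m t C| <= s]%N) => [/existsP//|/existsPn Hall].
  exfalso.
  have H1 : (#|{: {ffun 'I_n -> N.-tuple F}}| * s.+1 <= \sum_C #|@Bad F n N m t C|)%N.
    rewrite -sum_nat_const; apply: leq_sum => C _; by rewrite ltnNge Hall.
  have H2 := count_bound F N Hn Hmt.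
  move: H1 H2 Hnat; rewrite card_ffun card_tuple card_ord expnMn.
  have : (0 < (#|F| ^ N) ^ n)%N by rewrite !expn_gt0 Hq.
  set X := (\sum_C _)%N; set A := ((#|F| ^ N) ^ n)%N; set Q := (#|F| ^ n)%N.
  set B := ('C(_, _))%N; set M := (m ^ n)%N.
  clearbody X A Q B M; nia.
have N0 : (0 < N)%N by rewrite /N; lia.
pose i0 : 'I_N := Ordinal N0.
pose p (J : {set 'I_N}) := odflt i0 [pick i in J].
pose D := p @: @Bad F n N m t C.
pose K := ~: D.
pose S := subC C K.
have sizeS : size S = #|K| by rewrite size_map size_filter -card_count.
have HK : (L <= size S)%N.
  rewrite sizeS; have := cardsC D; rewrite card_ord.
  have := leq_imset_card p (@Bad F n N m t C); rewrite -/D /N.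
move=> H1 H2; have E : #|K| = #|~: D| := erefl; rewrite E; have H3 := leq_trans H1 HC; move: H2 H3 HLl; set d := #|D|; set k := #|~: D|; clearbody d k; lia.
have [msk [Hsz [Hcnt Hes]]] := HE S HK.
set u := mask msk [seq i <- enum 'I_N | i \in K].
have Hsub : subseq u (enum 'I_N) := subseq_trans (mask_subseq _ _) (filter_subseq _ _).
have Hu : uniq u := subseq_uniq Hsub (enum_uniq _).
have Hfu : u = [seq i <- enum 'I_N | i \in u] by apply/subseq_uniqP => //; exact: enum_uniq.
pose J := [set i in u].
have HSJ : subC C J = map (fC C) u.
  rewrite /subC [in RHS]Hfu; congr map; apply: eq_filter => i; by rewrite inE.
have Hmask : mask msk S = map (fC C) u by rewrite /S /subC -map_mask.
have cardJ : #|J| = t.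
  rewrite cardsE (card_uniqP Hu) size_mask //.
  by rewrite Hsz size_map.
have JBad : J \in @Bad F n N m t C by rewrite inE cardJ eqxx HSJ -Hmask Hes eqxx.
have pJ : p J \in J.
  rewrite /p; case: pickP => [x //|H0].
  have := eq_card0 H0; rewrite cardJ => Ht0; move: Ht; rewrite Ht0 //.
have pD : p J \in D := imset_f p JBad.
move: pJ; rewrite inE => /mem_mask; rewrite mem_filter inE pD //.
Qed.
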